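(* If $\mathcal{I},\mathcal{J}\subseteq\mathcal{B}_\Sigma$ are di-ideals, then $\mathcal{I}\star\mathcal{J}$ is a di-ideal.
   Context: Let $\mathbf{k}$ be a field of characteristic $0$ and $B=\bigoplus_{d\ge0}B_d$ a commutative graded $\mathbf{k}$-algebra with $B_0=\mathbf{k}$, generated by $B_1$, $\dim B_1<\infty$. Let $\mathcal{B}_\Sigma=\bigoplus_{n,d}\mathrm{Sym}^n(B_d)$ (the $\Sigma_n$-coinvariants of $B_d^{\otimes n}$), with product $\cdot$ given by multiplication in $\mathrm{Sym}(B_d)$ (zero between different $d$), and comultiplication $\Delta(w_1\cdots w_n)=\sum_{S\subseteq[n]}w_S\otimes w_{[n]\setminus S}$, $w_S=\prod_{i\in S}w_i$. Let $\mathcal{B}^\Sigma=\bigoplus_{n,d}(B_d^{\otimes n})^{\Sigma_n}$ with product $*:(B_d^{\otimes n})^{\Sigma_n}\otimes(B_e^{\otimes n})^{\Sigma_n}\to(B_{d+e}^{\otimes n})^{\Sigma_n}$ given by factorwise multiplication $(u_1\otimes\cdots\otimes u_n)*(v_1\otimes\cdots\otimes v_n)=u_1v_1\otimes\cdots\otimes u_nv_n$ (zero for different $n$). $\mathfrak{S}:\mathrm{Sym}^n(B_d)\to(B_d^{\otimes n})^{\Sigma_n}$, $w_1\cdots w_n\mapsto\sum_{\tau\in\Sigma_n}w_{\tau(1)}\otimes\cdots\otimes w_{\tau(n)}$, a linear isomorphism. An ideal of $\mathcal{B}_\Sigma$ is a bihomogeneous (in $(d,n)$) subspace closed under $\cdot$-multiplication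 by all elements of $\mathcal{B}_\Sigma$. An ideal $\mathcal{I}\subseteq\mathcal{B}_\Sigma$ is a di-ideal if $\mathfrak{S}(\mathcal{I})$ is an ideal with respect to $*$, i.e. $g*f\in\mathfrak{S}(\mathcal{I})$ for all $f\in\mathfrak{S}(\mathcal{I})$, $g\in\mathcal{B}^\Sigma$. The join $\mathcal{I}\star\mathcal{J}$ of ideals is defined by: $(\mathcal{I}\star\mathcal{J})_{d,n}$ is the kernel of $\mathrm{Sym}^n(B_d)\xrightarrow{\Delta}\bigoplus_{i=0}^n(\mathcal{B}_\Sigma/\mathcal{I})_{d,i}\otimes(\mathcal{B}_\Sigma/\mathcal{J})_{d,n-i}$. *)

(* Defs.v *)
From HB Require Import structures.
From mathcomp Require Import all_boot all_order all_algebra all_fingroup.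
From mathcomp Require Import mpoly.
Set Implicit Arguments. Unset Strict Implicit. Unset Printing Implicit Defensive.
Import GRing.Theory.
Local Open Scope ring_scope.

(* Coordinates: B_d has the basis (e d i)_{i < m d}, so
   - Sym(B_d) is the polynomial ring k[x_0..x_{m d - 1}]  ({mpoly k[m d]}),
     Sym^n(B_d) being its homogeneous part of degree n;
   - B_d^{(x)n} has basis e_{w 0} (x) ... (x) e_{w (n-1)}, w : 'I_n -> 'I_(m d),
     so a tensor is a function on such index words.                       *)

Section Defs.
Variable k : fieldType.
Variable m : nat -> nat.

Definition word (d n : nat) := {ffun 'I_n -> 'I_(m d)}.
Definition tens (d n : nat) := {ffun word d n -> k}.

Definition tact d n (s : 'S_n) (t : tens d n) : tens d n :=
  [ffun w : word d n => t [ffun i => w (s i)]].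
Definition sym_tensor d n (t : tens d n) := forall s : 'S_n, tact s t = t.
Definition symz d n (t : tens d n) : tens d n := \sum_(s : 'S_n) tact s t.

Definition mono d n (w : word d n) (S : {set 'I_n}) : {mpoly k[m d]} :=
  \prod_(i in S) 'X_(w i).
(* the quotient map B_d^{(x)n} -> Sym^n(B_d), w_1(x)...(x)w_n |-> w_1...w_n *)
Definition toSym d n (t : tens d n) : {mpoly k[m d]} :=
  \sum_(w : word d n) t w *: mono w setT.

(* graph of frakS : Sym^n(B_d) -> (B_d^{(x)n})^{Sigma_n},
   frakS (w_1...w_n) = sum_tau w_tau(1) (x) ... (x) w_tau(n), extended linearly *)
Definition frakS d n (f : {mpoly k[m d]}) (t : tens d n) :=
  exists t0 : tens d n, toSym t0 = f /\ symz t0 = t.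

(* bihomogeneous subsets of B_Sigma: the (d,n)-component is a subset of Sym^n(B_d) *)
Definition bset := forall d : nat, nat -> {mpoly k[m d]} -> Prop.

Definition is_ideal (I : bset) := forall d n,
  [/\ forall f, I d n f -> f \is n.-homog,
      I d n 0,
      forall (a : k) f g, I d n f -> I d n g -> I d n (a *: f + g)
    & forall p f g, I d n f -> g \is p.-homog -> I d (p + n)%N (g * f)].

Definition SImage (I : bset) d n (t : tens d n) :=
  exists f, I d n f /\ frakS f t.

(* structure constants of B:  e d i * e d' j = sum_l c d d' i j l *: e (d+d') l *)
Variable c : forall d d', 'I_(m d) -> 'I_(m d') -> 'I_(m (d + d')%N) -> k.

(* factorwise product * on tensors *)
Definition star d e n (u : tens d n) (v : tens e n) : tens (d + e)%N n :=
  [ffun w : word (d + e)%N n =>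
     \sum_(a : word d n) \sum_(b : word e n)
        u a * v b * \prod_(i < n) c (a i) (b i) (w i)].

Definition is_diideal (I : bset) :=
  is_ideal I /\
  forall d e n (f : tens d n) (g : tens e n),
    SImage I f -> sym_tensor g -> SImage I (star g f).

(* Tensor product Sym^i(B_d) (x) Sym^j(B_d), and its quotient
   (B_Sigma/I)_{d,i} (x) (B_Sigma/J)_{d,j}: an element sum_r p_r (x) q_r maps to 0
   in the quotient iff every bilinear form beta vanishing on I_{d,i} x Sym and on
   Sym x J_{d,j} satisfies sum_r beta p_r q_r = 0. *)
Definition bilinear_form d (beta : {mpoly k[m d]} -> {mpoly k[m d]} -> k) :=
  (forall (a : k) p p' q, beta (a *: p + p') q = a * beta p q + beta p' q) /\
  (forall (a : k) p q q', beta p (a *: q + q') = a * beta p q + beta p q').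

(* beta applied to the (i, n-i)-component of Delta(toSym t),
   Delta(w_1...w_n) = sum_{S subset [n]} w_S (x) w_{[n]\S} *)
Definition coprod_eval d n (t : tens d n) (i : nat)
    (beta : {mpoly k[m d]} -> {mpoly k[m d]} -> k) : k :=
  \sum_(w : word d n) t w *
    \sum_(S : {set 'I_n} | #|S| == i) beta (mono w S) (mono w (~: S)).

(* the join I * J: kernel of Sym^n(B_d) -> (+)_i (B/I)_{d,i} (x) (B/J)_{d,n-i} *)
Definition join (I J : bset) : bset := fun d n f =>
  f \is n.-homog /\
  forall t : tens d n, toSym t = f ->
  forall i, (i <= n)%N ->
  forall beta, bilinear_form beta ->
    (forall p q, I d i p -> beta p q = 0) ->
    (forall p q, J d (n - i)%N q -> beta p q = 0) ->
    coprod_eval t i beta = 0.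

End Defs.

(* Main.v *)
Require Import Defs.
From HB Require Import structures.
From mathcomp Require Import all_boot all_order all_algebra all_fingroup.
From mathcomp Require Import mpoly.
From mathcomp Require Import zify.
From mathcomp Require Import ring.
Set Implicit Arguments. Unset Strict Implicit. Unset Printing Implicit Defensive.
Import GRing.Theory.
Local Open Scope ring_scope.

Lemma count_enum_card (T:finType) (p : pred T) : count p (enum T) = #|p|.
Proof. by rewrite cardE enumT /enum_mem size_filter. Qed.

Lemma ffun_perm (T : eqType) n (f g : 'I_n -> T) :
  (forall x, #|[pred i | f i == x]| = #|[pred i | g i == x]|) ->
  exists s : 'S_n, forall i, g i = f (s i).
Proof.
move=> H.
have : perm_eq [tuple g i | i < n] [tuple f i | i < n].
  apply/allP => x _ /=; rewrite !count_map -enumT !count_enum_card.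
  apply/eqP; rewrite -(H x); apply: eq_card => i //.
case/tuple_permP => s Hs; exists s => i.
have := congr1 (fun t => nth (g i) t i) Hs.
rewrite -!tnth_nth !tnth_mktuple => ->.
by [].
Qed.

Section Basic.
Variable k : fieldType.
Variable m : nat -> nat.

Definition mu d n (w : word m d n) : 'X_{1..m d} := (\sum_(i < n) U_(w i))%MM.

Lemma monoE d n (w : word m d n) (S : {set 'I_n}) :
  mono k w S = 'X_[\sum_(i in S) U_(w i)].
Proof. by rewrite /mono (big_morph (@mpolyX _ k) (@mpolyXD _ k) (@mpolyX0 _ k)). Qed.

Lemma monoT d n (w : word m d n) : mono k w setT = 'X_[mu w].
Proof. by rewrite monoE /mu; congr mpolyX; apply: eq_bigl => i; rewrite in_setT. Qed.

Lemma mdeg_sumU d n (w : word m d n) (S : {set 'I_n}) :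
  mdeg (\sum_(i in S) U_(w i))%MM = #|S|.
Proof.
rewrite mdeg_sum -sum1_card; apply: eq_bigr => i _; exact: mdeg1.
Qed.

Lemma mono_homog d n (w : word m d n) (S : {set 'I_n}) :
  mono k w S \is #|S|.-homog.
Proof. by rewrite monoE dhomogX; apply/eqP; apply: mdeg_sumU. Qed.

Lemma muE d n (w : word m d n) j : mu w j = #|[pred i | w i == j]|.
Proof.
rewrite /mu mnm_sumE -sum1_card [RHS]big_mkcond /=; apply: eq_bigr => i _.
by rewrite mnm1E inE; case: eqP.
Qed.

Lemma mu_perm d n (w w' : word m d n) : mu w = mu w' ->
  exists s : 'S_n, forall i, w' i = w (s i).
Proof.
move=> H; apply: ffun_perm => x; by rewrite -!muE H.
Qed.

Definition wact d n (s : 'S_n) (w : word m d n) : word m d n := [ffun i => w (s i)].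

Lemma mu_wact d n s (w : word m d n) : mu (wact s w) = mu w.
Proof.
rewrite /mu [RHS](reindex_inj (@perm_inj _ s)); apply: eq_bigr => i _.
by rewrite ffunE.
Qed.

Lemma mu_eqP d n (w w' : word m d n) :
  mu w = mu w' <-> exists s : 'S_n, w' = wact s w.
Proof.
split=> [/mu_perm [s Hs]|[s ->]]; last by rewrite mu_wact.
by exists s; apply/ffunP => i; rewrite ffunE.
Qed.

End Basic.

Section Lift.
Variable k : fieldType.
Hypothesis hchar : [pchar k] =i pred0.
Variable m : nat -> nat.

Definition Nw d n (w : word m d n) : nat := #|[pred w' : word m d n | mu w' == mu w]|.

Lemma Nw_gt0 d n (w : word m d n) : (0 < Nw w)%N.
Proof. by apply/card_gt0P; exists w; rewrite inE. Qed.

Lemma Nw_eq d n (w w' : word m d n) : mu w = mu w' -> Nw w = Nw w'.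
Proof. by move=> H; apply: eq_card => u; rewrite !inE H. Qed.

Lemma natr_nz (q : nat) : (0 < q)%N -> q%:R != 0 :> k.
Proof. by move=> q0; rewrite (proj1 (pcharf0P k) hchar) -lt0n. Qed.

Lemma Nw_nz d n (w : word m d n) : (Nw w)%:R != 0 :> k.
Proof. exact/natr_nz/Nw_gt0. Qed.

Definition lft d n (x : {mpoly k[m d]}) : tens k m d n :=
  [ffun w => x@_(mu w) / (Nw w)%:R].

Lemma lftE d n (x : {mpoly k[m d]}) (w : word m d n) : lft n x w = x@_(mu w) / (Nw w)%:R.
Proof. by rewrite ffunE. Qed.

Lemma lft_lin d n (a : k) (x y : {mpoly k[m d]}) w :
  lft n (a *: x + y) w = a * lft n x w + lft n y w.
Proof. by rewrite !ffunE mcoeffD mcoeffZ mulrDl mulrA. Qed.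

Definition invariant d n (P : word m d n -> k) :=
  forall w w', mu w = mu w' -> P w = P w'.

Lemma lftX d n (P : word m d n -> k) (b : word m d n) : invariant P ->
  \sum_u lft n 'X_[mu b] u * P u = P b.
Proof.
move=> HP.
rewrite (bigID (fun u => mu u == mu b)) /= [X in _ + X]big1 ?addr0; last first.
  by move=> u /negbTE Hu; rewrite lftE mcoeffX eq_sym Hu mul0r mul0r.
rewrite (eq_bigr (fun _ => P b / (Nw b)%:R)); last first.
  move=> u /eqP Hu; rewrite lftE mcoeffX Hu eqxx (Nw_eq Hu) (HP _ _ Hu).
  by rewrite mul1r mulrC.
rewrite sumr_const (_ : #|_| = Nw b) //.
by rewrite -mulrnAr -[_^-1 *+ _]mulr_natr mulVf ?mulr1 // Nw_nz.
Qed.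

Lemma toSymE d n (t : tens k m d n) : toSym t = \sum_w t w *: 'X_[mu w].
Proof. by apply: eq_bigr => w _; rewrite monoT. Qed.

Lemma lft_toSym d n (t : tens k m d n) u :
  lft n (toSym t) u = \sum_w t w * lft n 'X_[mu w] u.
Proof.
rewrite lftE toSymE raddf_sum mulr_suml; apply: eq_bigr => w _.
change ((t w *: 'X_[mu w])@_(mu u) / (Nw u)%:R = t w * lft n 'X_[mu w] u).
by rewrite mcoeffZ lftE mulrA.
Qed.

Lemma sum_lft d n (t : tens k m d n) (P : word m d n -> k) : invariant P ->
  \sum_w t w * P w = \sum_u lft n (toSym t) u * P u.
Proof.
move=> HP; under [RHS]eq_bigr do rewrite lft_toSym mulr_suml.
rewrite exchange_big /=; apply: eq_bigr => w _.
by under eq_bigr do rewrite -mulrA; rewrite -mulr_sumr lftX.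
Qed.

End Lift.

Section Coprod.
Variable k : fieldType.
Hypothesis hchar : [pchar k] =i pred0.
Variable m : nat -> nat.

Lemma mono_wact d n s (w : word m d n) (S : {set 'I_n}) :
  mono k (wact s w) S = mono k w (s @: S).
Proof.
rewrite /mono big_imset /=; last by move=> x y _ _; apply: perm_inj.
by apply: eq_bigr => i _; rewrite ffunE.
Qed.

Lemma imsetC_perm n (s : 'S_n) (S : {set 'I_n}) : ~: (s @: S) = s @: (~: S).
Proof.
apply/setP => x; rewrite -[x](permKV s) inE !mem_imset ?inE //; exact: perm_inj.
Qed.

Lemma imset_permK n (s : 'S_n) (S : {set 'I_n}) : s @: ((s^-1)%g @: S) = S.
Proof.
by rewrite -imset_comp (eq_imset _ (permKV s)) imset_id.
Qed.

Definition Gco d n i (beta : {mpoly k[m d]} -> {mpoly k[m d]} -> k) (w : word m d n) :=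
  \sum_(S : {set 'I_n} | #|S| == i) beta (mono k w S) (mono k w (~: S)).

Lemma Gco_inv d n i beta : invariant (@Gco d n i beta).
Proof.
move=> w w' /mu_eqP [s ->]; rewrite /Gco.
rewrite [RHS](reindex_inj (imset_inj (@perm_inj _ (s^-1)%g))) /=.
apply: eq_big => S; first by rewrite card_imset //; apply: perm_inj.
by move=> _; rewrite imsetC_perm !mono_wact !imset_permK.
Qed.

Lemma coprodE d n (t : tens k m d n) i beta :
  coprod_eval t i beta = \sum_u lft n (toSym t) u * Gco i beta u.
Proof. exact: (sum_lft hchar t (@Gco_inv d n i beta)). Qed.

Lemma coprod_eq d n (t t' : tens k m d n) i beta :
  toSym t = toSym t' -> coprod_eval t i beta = coprod_eval t' i beta.
Proof. by move=> H; rewrite !coprodE H. Qed.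

End Coprod.

Section Surj.
Variable k : fieldType.
Variable m : nat -> nat.

Lemma sum_enum_nat (T : finType) (F : T -> nat) :
  (\sum_(j <- enum T) F j)%N = (\sum_j F j)%N.
Proof. by rewrite big_enum; apply: eq_bigl => j. Qed.

Lemma mu_surj d n (nu : 'X_{1..m d}) : mdeg nu = n -> exists w : word m d n, mu w = nu.
Proof.
move=> Hn.
pose s := flatten [seq nseq (nu j) j | j <- enum 'I_(m d)].
have Hs : size s = n.
  rewrite size_flatten /shape -map_comp sumnE big_map.
  by rewrite sum_enum_nat -Hn mdegE; apply: eq_bigr => j _; rewrite /= size_nseq.
have Hc : forall j, count_mem j s = nu j.
  move=> j; rewrite count_flatten -map_comp sumnE big_map sum_enum_nat.
  rewrite (bigD1 j) //= big1 ?addn0; first by rewrite count_nseq /= eqxx mul1n.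
  by move=> j' /negbTE Hj; rewrite /= count_nseq /= Hj.
case: n Hn Hs => [|n] Hn Hs.
  have nu0 : nu = 0%MM by apply/eqP; rewrite -mdeg_eq0 Hn.
  by exists (ffun0 (card_ord 0)); rewrite nu0 /mu big_ord0.
have x0 : 'I_(m d).
  by move: Hs; case: (s) => [//|x0 _ _]; exact: x0.
exists [ffun i : 'I_n.+1 => nth x0 s i]; apply/mnmP => j.
have E : [seq nth x0 s (val i) | i <- enum 'I_n.+1] = s.
  by rewrite -{2}(mkseq_nth x0 s) Hs /mkseq -val_enum_ord -map_comp.
rewrite muE -Hc -[in RHS]E count_map -count_enum_card.
by apply: eq_count => i; rewrite /= ffunE.
Qed.

End Surj.

Section ToSym.
Variable k : fieldType.
Hypothesis hchar : [pchar k] =i pred0.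
Variable m : nat -> nat.

Lemma mcoeff_toSym d n (t : tens k m d n) nu :
  (toSym t)@_nu = \sum_w t w * (mu w == nu)%:R.
Proof.
rewrite toSymE raddf_sum; apply: eq_bigr => w _.
by change ((t w *: 'X_[mu w])@_nu = t w * (mu w == nu)%:R); rewrite mcoeffZ mcoeffX.
Qed.

Lemma toSym_lft d n (x : {mpoly k[m d]}) : x \is n.-homog -> toSym (lft n x) = x.
Proof.
move=> hx; apply/mpolyP => nu; rewrite mcoeff_toSym.
case: (boolP [exists w : word m d n, mu w == nu]).
  case/existsP => w0 /eqP H0.
  have L := @lftX k hchar m d n (fun _ => 1) w0 (fun _ _ _ => erefl).
  rewrite -H0; transitivity (x@_(mu w0) * \sum_u lft n 'X_[mu w0] u * 1);
    last by rewrite L mulr1.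
  rewrite mulr_sumr; apply: eq_bigr => w _; rewrite !lftE mcoeffX !mulr1.
  case: (eqVneq (mu w) (mu w0)) => [E|ne].
    by rewrite E /= mulr1n mulr1 mul1r.
  have F0 : (false%:R : k) = 0 by [].
  by rewrite F0 mulr0 mul0r mulr0.
move=> /existsPn Hw.
rewrite big1; last by move=> w _; rewrite (negbTE (Hw w)) mulr0.
apply/esym/eqP; rewrite mcoeff_eq0; apply/negP => Hnu.
have /mu_surj [w Hw'] := dhomog_mf hx Hnu.
by have := Hw w; rewrite Hw' eqxx.
Qed.

Lemma toSym_homog d n (t : tens k m d n) : toSym t \is n.-homog.
Proof.
apply: rpred_sum => w _; apply: rpredZ.
by have := mono_homog k w setT; rewrite cardsT card_ord.
Qed.

End ToSym.

Lemma split_l p n (a : 'I_p) : split (lshift n a) = inl a.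
Proof. exact: (@unsplitK p n (inl a)). Qed.
Lemma split_r p n (b : 'I_n) : split (rshift p b) = inr b.
Proof. exact: (@unsplitK p n (inr b)). Qed.

Section Tens.
Variable k : fieldType.
Hypothesis hchar : [pchar k] =i pred0.
Variable m : nat -> nat.
Variable c : forall d d' : nat, 'I_(m d) -> 'I_(m d') -> 'I_(m (d + d')%N) -> k.

Lemma wactK d n (s : 'S_n) : cancel (@wact m d n s) (wact (s^-1)%g).
Proof. by move=> w; apply/ffunP => i; rewrite !ffunE permKV. Qed.

Lemma wact_inj d n (s : 'S_n) : injective (@wact m d n s).
Proof. exact: can_inj (wactK s). Qed.

Lemma sum_wact (R : nmodType) d n (s : 'S_n) (F : word m d n -> R) :
  \sum_w F w = \sum_w F (wact s w).
Proof. exact: (reindex_inj (@wact_inj d n s)). Qed.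

Lemma tactE d n s (t : tens k m d n) w : tact s t w = t (wact s w).
Proof. by rewrite ffunE. Qed.

Lemma symzE d n (t : tens k m d n) w : symz t w = \sum_(s : 'S_n) t (wact s w).
Proof. by rewrite /symz sum_ffunE; apply: eq_bigr => s _; rewrite tactE. Qed.

Lemma symE d n (t : tens k m d n) : sym_tensor t -> forall s w, t (wact s w) = t w.
Proof. by move=> H s w; rewrite -tactE H. Qed.

Lemma toSym_tact d n s (t : tens k m d n) : toSym (tact s t) = toSym t.
Proof.
rewrite !toSymE [RHS](sum_wact s); apply: eq_bigr => w _.
by rewrite tactE mu_wact.
Qed.

Lemma toSym_symz d n (t : tens k m d n) : toSym (symz t) = n`!%:R *: toSym t.
Proof.
rewrite {1}toSymE; under eq_bigr do rewrite symzE scaler_suml.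
rewrite exchange_big /= (eq_bigr (fun _ => toSym t)); last first.
  move=> s _; rewrite -(toSym_tact s) toSymE; apply: eq_bigr => w _.
  by rewrite tactE.
by rewrite sumr_const card_Sn scaler_nat.
Qed.

Lemma toSym_scale d n a (t : tens k m d n) : toSym [ffun w => a * t w] = a *: toSym t.
Proof.
rewrite !toSymE scaler_sumr; apply: eq_bigr => w _; by rewrite ffunE scalerA.
Qed.

Lemma lft_wact d n (x : {mpoly k[m d]}) s w : lft n x (wact s w) = lft n x w.
Proof. by rewrite !lftE mu_wact (Nw_eq (mu_wact s w)). Qed.

Lemma lft_sym d n (x : {mpoly k[m d]}) : sym_tensor (lft n x).
Proof. by move=> s; apply/ffunP => w; rewrite tactE lft_wact. Qed.

Definition Pc d e n (a : word m e n) (b : word m d n) (w : word m (e + d) n) :=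
  \prod_i c (a i) (b i) (w i).

Lemma starE d e n (g : tens k m e n) (t : tens k m d n) w :
  star c g t w = \sum_a \sum_b g a * t b * Pc a b w.
Proof. by rewrite ffunE. Qed.

Lemma Pc_wact d e n s (a : word m e n) (b : word m d n) w :
  Pc (wact s a) (wact s b) (wact s w) = Pc a b w.
Proof.
rewrite /Pc [RHS](reindex_inj (@perm_inj _ s)); apply: eq_bigr => i _.
by rewrite !ffunE.
Qed.

Lemma star_wact d e n s (g : tens k m e n) (t : tens k m d n) w :
  sym_tensor g -> star c g t (wact s w) = star c g (tact s t) w.
Proof.
move=> hg; rewrite !starE (sum_wact s); apply: eq_bigr => a _.
rewrite (sum_wact s); apply: eq_bigr => b _.
by rewrite Pc_wact (symE hg) tactE.
Qed.

Lemma symz_star d e n (g : tens k m e n) (t : tens k m d n) :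
  sym_tensor g -> symz (star c g t) = star c g (symz t).
Proof.
move=> hg; apply/ffunP => w; rewrite symzE.
under eq_bigr do rewrite star_wact // starE.
rewrite starE exchange_big; apply: eq_bigr => a _.
rewrite exchange_big; apply: eq_bigr => b _.
by rewrite symzE -!mulr_suml -mulr_sumr; under eq_bigr do rewrite tactE.
Qed.

End Tens.

Section Bil.
Variable k : fieldType.
Variable m : nat -> nat.
Variable d : nat.
Implicit Types beta : {mpoly k[m d]} -> {mpoly k[m d]} -> k.

Lemma bf0l beta : bilinear_form beta -> forall q, beta 0 q = 0.
Proof.
move=> [H _] q; have := H 1 0 0 q; rewrite scale1r addr0 mul1r.
by move/(congr1 (fun z => z - beta 0 q)); rewrite subrr addrK => <-.
Qed.

Lemma bf0r beta : bilinear_form beta -> forall p, beta p 0 = 0.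
Proof.
move=> [_ H] p; have := H 1 p 0 0; rewrite scale1r addr0 mul1r.
by move/(congr1 (fun z => z - beta p 0)); rewrite subrr addrK => <-.
Qed.

Lemma bf_suml beta (I : finType) (P : pred I) (a : I -> k) (x : I -> {mpoly k[m d]}) q :
  bilinear_form beta ->
  beta (\sum_(i | P i) a i *: x i) q = \sum_(i | P i) a i * beta (x i) q.
Proof.
move=> hb; apply: (big_rec2 (fun u v => beta v q = u)); first exact: bf0l.
by move=> i y z _ <-; rewrite hb.1.
Qed.

Lemma bf_sumr beta (I : finType) (P : pred I) (a : I -> k) (x : I -> {mpoly k[m d]}) p :
  bilinear_form beta ->
  beta p (\sum_(i | P i) a i *: x i) = \sum_(i | P i) a i * beta p (x i).
Proof.
move=> hb; apply: (big_rec2 (fun u v => beta p v = u)); first exact: bf0r.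
by move=> i y z _ <-; rewrite hb.2.
Qed.

End Bil.

Section DiStep.
Variable k : fieldType.
Hypothesis hchar : [pchar k] =i pred0.
Variable m : nat -> nat.
Variable c : forall d d' : nat, 'I_(m d) -> 'I_(m d') -> 'I_(m (d + d')%N) -> k.

Lemma ideal_scale (I : bset k m) d n a f : is_ideal I -> I d n f -> I d n (a *: f).
Proof.
move=> HI hf; have [_ h0 hl _] := HI d n.
by have := hl a f 0 hf h0; rewrite addr0.
Qed.

Lemma fact_nz n : n`!%:R != 0 :> k.
Proof. exact/natr_nz/fact_gt0. Qed.

Lemma diideal_step (I : bset k m) d e n (x : {mpoly k[m d]}) (g1 : tens k m e n) :
  is_diideal c I -> I d n x -> sym_tensor g1 ->
  I (e + d)%N n (toSym (star c g1 (lft n x))).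
Proof.
move=> [HI HD] hx hg.
have [homI _ _ _] := HI d n; have hom := homI x hx.
have HS : SImage I (lft n x).
  exists ((n`!%:R)^-1 *: x); split; first exact: ideal_scale.
  exists [ffun w => (n`!%:R)^-1 * lft n x w]; split.
    by rewrite toSym_scale toSym_lft.
  apply/ffunP => w; rewrite symzE.
  under eq_bigr do rewrite ffunE lft_wact.
  rewrite sumr_const card_Sn -mulrnAl -[_^-1 *+ _]mulr_natr mulVf ?mul1r //; exact: fact_nz.
have [F [HF [t1 [ht1 hs1]]]] := HD _ _ _ _ _ HS hg.
rewrite -hs1 toSym_symz ht1; exact: ideal_scale.
Qed.

End DiStep.

Section Cat.

Definition fcat (T : Type) p n (u : {ffun 'I_p -> T}) (v : {ffun 'I_n -> T}) :
  {ffun 'I_(p + n) -> T} :=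
  [ffun x => match split x with inl a => u a | inr b => v b end].
Definition fl (T : Type) p n (w : {ffun 'I_(p + n) -> T}) : {ffun 'I_p -> T} :=
  [ffun a => w (lshift n a)].
Definition fr (T : Type) p n (w : {ffun 'I_(p + n) -> T}) : {ffun 'I_n -> T} :=
  [ffun b => w (rshift p b)].

Lemma fcat_l (T : Type) p n (u : {ffun 'I_p -> T}) (v : {ffun 'I_n -> T}) a :
  fcat u v (lshift n a) = u a.
Proof. by rewrite ffunE split_l. Qed.
Lemma fcat_r (T : Type) p n (u : {ffun 'I_p -> T}) (v : {ffun 'I_n -> T}) b :
  fcat u v (rshift p b) = v b.
Proof. by rewrite ffunE split_r. Qed.

Lemma fcatK (T : Type) p n (w : {ffun 'I_(p + n) -> T}) : fcat (fl w) (fr w) = w.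
Proof.
apply/ffunP => x; rewrite ffunE; move: (splitK x).
by case: (split x) => [a|b] /= <-; rewrite ffunE.
Qed.

Lemma fl_fcat (T : Type) p n (u : {ffun 'I_p -> T}) (v : {ffun 'I_n -> T}) : fl (fcat u v) = u.
Proof. by apply/ffunP => a; rewrite ffunE fcat_l. Qed.
Lemma fr_fcat (T : Type) p n (u : {ffun 'I_p -> T}) (v : {ffun 'I_n -> T}) : fr (fcat u v) = v.
Proof. by apply/ffunP => a; rewrite ffunE fcat_r. Qed.

Lemma sum_fcat (R : nmodType) (T : finType) p n (F : {ffun 'I_(p + n) -> T} -> R) :
  \sum_w F w = \sum_u \sum_v F (fcat u v).
Proof.
rewrite pair_big /= (reindex (fun uv => fcat uv.1 uv.2)) /=; last first.
  exists (fun w => (fl w, fr w)) => [[u v] _|w _] /=; last exact: fcatK.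
  by rewrite fl_fcat fr_fcat.
by apply: eq_bigl.
Qed.

Definition scat p n (S1 : {set 'I_p}) (S2 : {set 'I_n}) : {set 'I_(p + n)} :=
  [set x | match split x with inl a => a \in S1 | inr b => b \in S2 end].

Lemma scat_l p n (S1 : {set 'I_p}) (S2 : {set 'I_n}) a : (lshift n a \in scat S1 S2) = (a \in S1).
Proof. by rewrite inE split_l. Qed.
Lemma scat_r p n (S1 : {set 'I_p}) (S2 : {set 'I_n}) b : (rshift p b \in scat S1 S2) = (b \in S2).
Proof. by rewrite inE split_r. Qed.

Lemma sum_scat (R : nmodType) p n (F : {set 'I_(p + n)} -> R) :
  \sum_S F S = \sum_S1 \sum_S2 F (scat S1 S2).
Proof.
rewrite pair_big /= (reindex (fun S => scat S.1 S.2)) /=; last first.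
  exists (fun S : {set 'I_(p + n)} => ([set a | lshift n a \in S], [set b | rshift p b \in S])).
    move=> [S1 S2] _ /=; congr pair; apply/setP => x; by rewrite inE ?scat_l ?scat_r.
  move=> S _ /=; apply/setP => x; rewrite inE; move: (splitK x).
  by case: (split x) => [a|b] /= <-; rewrite inE.
by apply: eq_bigl.
Qed.

Lemma scatC p n (S1 : {set 'I_p}) (S2 : {set 'I_n}) : ~: scat S1 S2 = scat (~: S1) (~: S2).
Proof.
apply/setP => x; rewrite !inE; by case: (split x) => [a|b]; rewrite inE.
Qed.

Lemma card_scat p n (S1 : {set 'I_p}) (S2 : {set 'I_n}) : #|scat S1 S2| = (#|S1| + #|S2|)%N.
Proof.
rewrite -!sum1_card big_split_ord /=; congr addn; apply: eq_bigl => x.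
  by rewrite scat_l. by rewrite scat_r.
Qed.

Variable k : fieldType.
Variable m : nat -> nat.

Lemma mono_fcat d p n (u : word m d p) (v : word m d n) S1 S2 :
  mono k (fcat u v) (scat S1 S2) = mono k u S1 * mono k v S2.
Proof.
rewrite /mono big_split_ord /=; congr (_ * _); apply: eq_big => x;
  by rewrite ?scat_l ?scat_r ?fcat_l ?fcat_r.
Qed.

Lemma mu_fcat d p n (u : word m d p) (v : word m d n) :
  mu (fcat u v : word m d (p + n)) = (mu u + mu v)%MM.
Proof.
by rewrite /mu big_split_ord /=; congr (_ + _)%MM; apply: eq_bigr => x _;
  rewrite ?fcat_l ?fcat_r.
Qed.

End Cat.

Section JoinIdeal.
Variable k : fieldType.
Hypothesis hchar : [pchar k] =i pred0.
Variable m : nat -> nat.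
Lemma join_vanish (I J : bset k m) d n f i beta : @join k m I J d n f -> (i <= n)%N -> bilinear_form beta ->
  (forall p q, I d i p -> beta p q = 0) -> (forall p q, J d (n - i)%N q -> beta p q = 0) ->
  \sum_u lft n f u * Gco i beta u = 0.
Proof.
move=> [hf H] hi hb hI hJ.
by have := H (lft n f) (toSym_lft hchar hf) i hi beta hb hI hJ; rewrite (coprodE hchar) (toSym_lft hchar hf).
Qed.

Lemma join0 (I J : bset k m) d n : @join k m I J d n 0.
Proof.
split; first exact: rpred0.
move=> t Ht i _ beta _ _ _; rewrite (coprodE hchar) Ht big1 // => u _.
by rewrite lftE mcoeff0 mul0r mul0r.
Qed.

Lemma join_lin (I J : bset k m) d n a f g : @join k m I J d n f -> @join k m I J d n g -> @join k m I J d n (a *: f + g).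
Proof.
move=> jf jg; split; first by apply: rpredD; [apply: rpredZ; exact: jf.1 | exact: jg.1].
move=> t Ht i hi beta hb hI hJ; rewrite (coprodE hchar) Ht.
under eq_bigr do rewrite lft_lin mulrDl -mulrA.
by rewrite big_split /= -mulr_sumr !(join_vanish _ hi hb hI hJ) // mulr0 addr0.
Qed.

Lemma join_mul (I J : bset k m) d n p f (g : {mpoly k[m d]}) :
  is_ideal I -> is_ideal J -> @join k m I J d n f -> g \is p.-homog ->
  @join k m I J d (p + n)%N (g * f).
Proof.
move=> HI HJ [hf H] hg; split; first exact: dhomogM.
move=> t Ht i hi beta hb hI hJ.
pose tg := lft p g; pose tf := lft n f.
pose T : tens k m d (p + n) := [ffun w => tg (fl w) * tf (fr w)].
have TS : toSym T = g * f.
  rewrite -(toSym_lft hchar hg) -(toSym_lft hchar hf) !toSymE sum_fcat.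
  rewrite mulr_suml; apply: eq_bigr => u _; rewrite mulr_sumr; apply: eq_bigr => v _.
  rewrite ffunE fl_fcat fr_fcat -scalerAl -scalerAr scalerA -mpolyXD mu_fcat.
  by [].
rewrite (coprod_eq hchar i beta (etrans Ht (esym TS))) /coprod_eval sum_fcat.
apply: big1 => u _.
under eq_bigr => v _ do
  rewrite ffunE fl_fcat fr_fcat big_mkcond sum_scat /= mulr_sumr.
rewrite exchange_big big1 // => S1 _.
under eq_bigr do rewrite -mulrA.
rewrite -mulr_sumr.
apply/eqP; rewrite mulf_eq0 orbC; apply/orP; left; apply/eqP.
under eq_bigr => v _ do under eq_bigr => S2 _ do rewrite card_scat mono_fcat scatC mono_fcat.
case: (boolP ((#|S1| <= i) && (i - #|S1| <= n))%N).
  case/andP => h1 h2.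
  pose beta' := fun x y => beta (mono k u S1 * x) (mono k u (~: S1) * y).
  have hb' : bilinear_form beta'.
    by split => a x x' y; rewrite /beta' mulrDr -scalerAr ?hb.1 ?hb.2.
  have hI' : forall x y, I d (i - #|S1|)%N x -> beta' x y = 0.
    move=> x y hx; apply: hI; have [_ _ _ hm] := HI d (i - #|S1|)%N.
    by have := hm _ _ _ hx (mono_homog k u S1); rewrite subnKC.
  have hJ' : forall x y, J d (n - (i - #|S1|))%N y -> beta' x y = 0.
    move=> x y hy; apply: hJ; have [_ _ _ hm] := HJ d (n - (i - #|S1|))%N.
    have := hm _ _ _ hy (mono_homog k u (~: S1)).
    have -> : (#|~: S1| + (n - (i - #|S1|)) = p + n - i)%N; last by [].
    by have := cardsC S1; rewrite card_ord; lia.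
  have := H tf (toSym_lft hchar hf) (i - #|S1|)%N h2 beta' hb' hI' hJ'.
  move=> E; transitivity (coprod_eval tf (i - #|S1|) beta'); last exact: E.
  rewrite /coprod_eval; apply: eq_bigr => v _; congr (_ * _).
  rewrite [RHS]big_mkcond; apply: eq_bigr => S2 _.
  have -> : (#|S2| == i - #|S1|)%N = (#|S1| + #|S2| == i)%N by apply/idP/idP => /eqP E2; apply/eqP; lia.
  by [].

move=> hn; apply: big1 => v _; rewrite big1 ?mulr0 // => S2 _.
case: eqP => // E; exfalso; move/negP: hn; apply.
have := max_card S2; rewrite card_ord => h2.
apply/andP; split; lia.
Qed.

End JoinIdeal.

Lemma Pc_fcat (k : fieldType) (m : nat -> nat)
  (c : forall d d' : nat, 'I_(m d) -> 'I_(m d') -> 'I_(m (d + d')%N) -> k) d e p n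
  (a1 : word m e p) (a2 : word m e n) (b1 : word m d p) (b2 : word m d n)
  (w1 : word m (e + d) p) (w2 : word m (e + d) n) :
  Pc c (fcat a1 a2 : word m e (p + n)) (fcat b1 b2 : word m d (p + n))
     (fcat w1 w2 : word m (e + d) (p + n)) = Pc c a1 b1 w1 * Pc c a2 b2 w2.
Proof.
by rewrite /Pc big_split_ord /=; congr (_ * _); apply: eq_bigr => x _;
  rewrite ?fcat_l ?fcat_r.
Qed.

Lemma mono0 (k : fieldType) (m : nat -> nat) d n (w : word m d n) : mono k w set0 = 1.
Proof. by rewrite /mono big_set0. Qed.

Section Perm5.
Variable R : nmodType.
Variables A B C D E : finType.
Variable F : A -> B -> C -> D -> E -> R.

Lemma sum_perm5a :
  \sum_a \sum_b \sum_c \sum_d \sum_e F a b c d e =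
  \sum_c \sum_e \sum_d \sum_b \sum_a F a b c d e.
Proof.
transitivity (\sum_a \sum_c \sum_b \sum_d \sum_e F a b c d e).
  by apply: eq_bigr => a _; exact: exchange_big.
rewrite exchange_big; apply: eq_bigr => c _.
transitivity (\sum_a \sum_b \sum_e \sum_d F a b c d e).
  by apply: eq_bigr => a _; apply: eq_bigr => b _; exact: exchange_big.
transitivity (\sum_a \sum_e \sum_b \sum_d F a b c d e).
  by apply: eq_bigr => a _; exact: exchange_big.
rewrite exchange_big; apply: eq_bigr => e _.
transitivity (\sum_a \sum_d \sum_b F a b c d e).
  by apply: eq_bigr => a _; exact: exchange_big.
rewrite exchange_big; apply: eq_bigr => d _.
exact: exchange_big.
Qed.

Lemma sum_perm5b :
  \sum_a \sum_b \sum_c \sum_d \sum_e F a b c d e =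
  \sum_b \sum_d \sum_e \sum_c \sum_a F a b c d e.
Proof.
rewrite exchange_big; apply: eq_bigr => b _.
transitivity (\sum_a \sum_d \sum_c \sum_e F a b c d e).
  by apply: eq_bigr => a _; exact: exchange_big.
rewrite exchange_big; apply: eq_bigr => d _.
transitivity (\sum_a \sum_e \sum_c F a b c d e).
  by apply: eq_bigr => a _; exact: exchange_big.
rewrite exchange_big; apply: eq_bigr => e _.
exact: exchange_big.
Qed.

End Perm5.

Section Core.
Variable k : fieldType.
Hypothesis hchar : [pchar k] =i pred0.
Variable m : nat -> nat.
Variable c : forall d d' : nat, 'I_(m d) -> 'I_(m d') -> 'I_(m (d + d')%N) -> k.
Variables d e i j : nat.
Variable g : tens k m e (i + j).
Hypothesis hg : sym_tensor g.
Variable beta : {mpoly k[m (e + d)]} -> {mpoly k[m (e + d)]} -> k.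

Definition Hf (b : word m d (i + j)) (S : {set 'I_(i + j)}) :=
  \sum_a g a * \sum_w Pc c a b w * beta (mono k w S) (mono k w (~: S)).

Lemma stepA (t0 : tens k m d (i + j)) :
  coprod_eval (star c g t0) i beta = \sum_b t0 b * \sum_(S : {set 'I_(i + j)} | #|S| == i) Hf b S.
Proof.
rewrite /coprod_eval /Hf.
transitivity (\sum_a \sum_b \sum_w \sum_(S : {set 'I_(i + j)} | #|S| == i)
   g a * t0 b * Pc c a b w * beta (mono k w S) (mono k w (~: S))).
  transitivity (\sum_w \sum_a \sum_b \sum_(S : {set 'I_(i + j)} | #|S| == i)
     g a * t0 b * Pc c a b w * beta (mono k w S) (mono k w (~: S))).
    apply: eq_bigr => w _; rewrite starE mulr_suml; apply: eq_bigr => a _.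
    by rewrite mulr_suml; apply: eq_bigr => b _; rewrite mulr_sumr.
  by rewrite exchange_big; apply: eq_bigr => a _; rewrite exchange_big.
symmetry.
transitivity (\sum_b \sum_(S : {set 'I_(i + j)} | #|S| == i) \sum_a \sum_w
   g a * t0 b * Pc c a b w * beta (mono k w S) (mono k w (~: S))).
  apply: eq_bigr => b _; rewrite mulr_sumr; apply: eq_bigr => S _.
  rewrite mulr_sumr; apply: eq_bigr => a _; rewrite !mulr_sumr; apply: eq_bigr => w _.
  ring.
rewrite [RHS]exchange_big; apply: eq_bigr => b _.
by rewrite exchange_big; apply: eq_bigr => a _; rewrite exchange_big.
Qed.

Lemma Hf_wact s b S : Hf (wact s b) S = Hf b (s @: S).
Proof.
rewrite /Hf (sum_wact s); apply: eq_bigr => a _; rewrite (symE hg).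
congr (_ * _); rewrite (sum_wact s); apply: eq_bigr => w _.
by rewrite Pc_wact !mono_wact imsetC_perm.
Qed.

Definition S0 : {set 'I_(i + j)} := scat setT set0.

Lemma S0_perm (S : {set 'I_(i + j)}) : #|S| = i -> exists s : 'S_(i + j), S = s @: S0.
Proof.
move=> hS.
have [s Hs] : exists s : 'S_(i + j), forall x, (x \in S0) = (s x \in S).
  apply: (@ffun_perm bool) => y.
  have cS0 : #|S0| = i by rewrite card_scat cardsT cards0 card_ord addn0.
  have cnt : forall (A : {set 'I_(i + j)}) (y : bool),
      #|[pred x | (x \in A) == y]| = if y then #|A| else #|~: A|.
    by move=> A [] ; apply: eq_card => x; rewrite !inE; case: (x \in A).
  rewrite !cnt; case: y => //; first by rewrite hS cS0.
  by have := cardsC S; have := cardsC S0; rewrite cS0 hS; lia.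
exists s; apply/setP => y; rewrite -[y](permKV s) mem_imset; last exact: perm_inj.
by rewrite Hs.
Qed.

Definition Psi (u : word m d i) (v : word m d j) :=
  \sum_(a1 : word m e i) \sum_(a2 : word m e j) g (fcat a1 a2) *
    \sum_(w1 : word m (e + d) i) \sum_(w2 : word m (e + d) j)
       Pc c a1 u w1 * Pc c a2 v w2 * beta 'X_[mu w1] 'X_[mu w2].

Lemma Hf_fcat (u : word m d i) (v : word m d j) : Hf (fcat u v) S0 = Psi u v.
Proof.
rewrite /Hf /Psi sum_fcat; apply: eq_bigr => a1 _; apply: eq_bigr => a2 _.
congr (_ * _); rewrite sum_fcat; apply: eq_bigr => w1 _; apply: eq_bigr => w2 _.
by rewrite Pc_fcat /S0 scatC setCT setC0 !mono_fcat !mono0 !monoT mulr1 mul1r.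
Qed.

Lemma g_fcat_l (s : 'S_i) (a1 : word m e i) (a2 : word m e j) :
  g (fcat (wact s a1) a2) = g (fcat a1 a2).
Proof.
have : mu (fcat a1 a2 : word m e (i + j)) = mu (fcat (wact s a1) a2 : word m e (i + j)).
  by rewrite !mu_fcat mu_wact.
by case/mu_eqP => s' ->; rewrite (symE hg).
Qed.

Lemma g_fcat_r (s : 'S_j) (a1 : word m e i) (a2 : word m e j) :
  g (fcat a1 (wact s a2)) = g (fcat a1 a2).
Proof.
have : mu (fcat a1 a2 : word m e (i + j)) = mu (fcat a1 (wact s a2) : word m e (i + j)).
  by rewrite !mu_fcat mu_wact.
by case/mu_eqP => s' ->; rewrite (symE hg).
Qed.

Lemma Psi_inv_l (u u' : word m d i) v : mu u = mu u' -> Psi u v = Psi u' v.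
Proof.
case/mu_eqP => s ->; rewrite /Psi [RHS](sum_wact s); apply: eq_bigr => a1 _.
apply: eq_bigr => a2 _; rewrite g_fcat_l; congr (_ * _).
rewrite [RHS](sum_wact s); apply: eq_bigr => w1 _; apply: eq_bigr => w2 _.
by rewrite mu_wact Pc_wact.
Qed.

Lemma Psi_inv_r u (v v' : word m d j) : mu v = mu v' -> Psi u v = Psi u v'.
Proof.
case/mu_eqP => s ->; rewrite /Psi; apply: eq_bigr => a1 _.
rewrite [RHS](sum_wact s); apply: eq_bigr => a2 _; rewrite g_fcat_r; congr (_ * _).
apply: eq_bigr => w1 _; rewrite [RHS](sum_wact s); apply: eq_bigr => w2 _.
by rewrite mu_wact Pc_wact.
Qed.

Definition betap (x y : {mpoly k[m d]}) :=
  \sum_(u : word m d i) \sum_(v : word m d j) lft i x u * lft j y v * Psi u v.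

Lemma betap_bil : bilinear_form betap.
Proof.
split=> a x x' y; rewrite /betap mulr_sumr -big_split; apply: eq_bigr => u _;
  rewrite mulr_sumr -big_split; apply: eq_bigr => v _; rewrite lft_lin /=; ring.
Qed.

Lemma betap_X (u0 : word m d i) (v0 : word m d j) :
  betap 'X_[mu u0] 'X_[mu v0] = Psi u0 v0.
Proof.
rewrite /betap.
transitivity (\sum_u lft i 'X_[mu u0] u * Psi u v0).
  apply: eq_bigr => u _; rewrite -(lftX hchar (P := Psi u) v0); last first.
    by move=> v v' h; apply: Psi_inv_r.
  by rewrite mulr_sumr; apply: eq_bigr => v _; rewrite mulrA.
by apply: lftX => // u u' h; apply: Psi_inv_l.
Qed.

Lemma Hf_betap b (S : {set 'I_(i + j)}) : #|S| = i ->
  Hf b S = betap (mono k b S) (mono k b (~: S)).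
Proof.
case/S0_perm => s ->; rewrite -Hf_wact imsetC_perm -!mono_wact.
rewrite -(fcatK (wact s b)) Hf_fcat /S0 scatC setCT setC0 !mono_fcat !mono0 !monoT.
by rewrite mulr1 mul1r betap_X.
Qed.

Definition g1 (a2 : word m e j) : tens k m e i := [ffun a1 => g (fcat a1 a2)].
Definition g2 (a1 : word m e i) : tens k m e j := [ffun a2 => g (fcat a1 a2)].

Lemma g1_sym a2 : sym_tensor (g1 a2).
Proof. by move=> s; apply/ffunP => a1; rewrite tactE !ffunE g_fcat_l. Qed.
Lemma g2_sym a1 : sym_tensor (g2 a1).
Proof. by move=> s; apply/ffunP => a2; rewrite tactE !ffunE g_fcat_r. Qed.

Hypothesis hb : bilinear_form beta.

Lemma keyI x v : \sum_u lft i x u * Psi u v =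
  \sum_a2 \sum_w2 Pc c a2 v w2 * beta (toSym (star c (g1 a2) (lft i x))) 'X_[mu w2].
Proof.
transitivity (\sum_(u : word m d i) \sum_(a1 : word m e i) \sum_(a2 : word m e j)
   \sum_(w1 : word m (e + d) i) \sum_(w2 : word m (e + d) j)
   lft i x u * g (fcat a1 a2) * Pc c a1 u w1 * Pc c a2 v w2 * beta 'X_[mu w1] 'X_[mu w2]).
  apply: eq_bigr => u _; rewrite /Psi mulr_sumr; apply: eq_bigr => a1 _.
  rewrite mulr_sumr; apply: eq_bigr => a2 _.
  rewrite !mulr_sumr; apply: eq_bigr => w1 _; rewrite !mulr_sumr; apply: eq_bigr => w2 _.
  ring.
rewrite sum_perm5a; apply: eq_bigr => a2 _; apply: eq_bigr => w2 _.
rewrite toSymE bf_suml // mulr_sumr; apply: eq_bigr => w1 _.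
rewrite starE mulr_suml mulr_sumr; apply: eq_bigr => a1 _.
rewrite mulr_suml mulr_sumr; apply: eq_bigr => u _; rewrite !ffunE; ring.
Qed.

Lemma keyJ y u : \sum_v lft j y v * Psi u v =
  \sum_a1 \sum_w1 Pc c a1 u w1 * beta 'X_[mu w1] (toSym (star c (g2 a1) (lft j y))).
Proof.
transitivity (\sum_(v : word m d j) \sum_(a1 : word m e i) \sum_(a2 : word m e j)
   \sum_(w1 : word m (e + d) i) \sum_(w2 : word m (e + d) j)
   lft j y v * g (fcat a1 a2) * Pc c a1 u w1 * Pc c a2 v w2 * beta 'X_[mu w1] 'X_[mu w2]).
  apply: eq_bigr => v _; rewrite /Psi mulr_sumr; apply: eq_bigr => a1 _.
  rewrite mulr_sumr; apply: eq_bigr => a2 _.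
  rewrite !mulr_sumr; apply: eq_bigr => w1 _; rewrite !mulr_sumr; apply: eq_bigr => w2 _.
  ring.
rewrite sum_perm5b; apply: eq_bigr => a1 _; apply: eq_bigr => w1 _.
rewrite toSymE bf_sumr // mulr_sumr; apply: eq_bigr => w2 _.
rewrite starE mulr_suml mulr_sumr; apply: eq_bigr => a2 _.
rewrite mulr_suml mulr_sumr; apply: eq_bigr => v _; rewrite !ffunE; ring.
Qed.

Lemma betap_I (I : bset k m) : is_diideal c I ->
  (forall p q, I (e + d)%N i p -> beta p q = 0) ->
  forall x y, I d i x -> betap x y = 0.
Proof.
move=> DI hI x y hx; rewrite /betap exchange_big big1 // => v _.
transitivity (lft j y v * \sum_u lft i x u * Psi u v).
  by rewrite mulr_sumr; apply: eq_bigr => u _; ring.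
rewrite keyI big1 ?mulr0 // => a2 _; rewrite big1 // => w2 _.
by rewrite hI ?mulr0 //; exact: (diideal_step hchar DI hx (g1_sym a2)).
Qed.

Lemma betap_J (J : bset k m) : is_diideal c J ->
  (forall p q, J (e + d)%N j q -> beta p q = 0) ->
  forall x y, J d j y -> betap x y = 0.
Proof.
move=> DJ hJ x y hy; rewrite /betap big1 // => u _.
transitivity (lft i x u * \sum_v lft j y v * Psi u v).
  by rewrite mulr_sumr; apply: eq_bigr => v _; ring.
rewrite keyJ big1 ?mulr0 // => a1 _; rewrite big1 // => w1 _.
by rewrite hJ ?mulr0 //; exact: (diideal_step hchar DJ hy (g2_sym a1)).
Qed.

Lemma core_eq (t0 : tens k m d (i + j)) :
  coprod_eval (star c g t0) i beta = coprod_eval t0 i betap.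
Proof.
rewrite stepA /coprod_eval; apply: eq_bigr => b _; congr (_ * _).
by apply: eq_bigr => S /eqP hS; exact: Hf_betap.
Qed.

End Core.

Section Final.
Variable k : fieldType.
Hypothesis hchar : [pchar k] =i pred0.
Variable m : nat -> nat.
Variable c : forall d d' : nat, 'I_(m d) -> 'I_(m d') -> 'I_(m (d + d')%N) -> k.

Lemma join_is_ideal (I J : bset k m) : is_ideal I -> is_ideal J -> is_ideal (join I J).
Proof.
move=> HI HJ d n; split.
- by move=> f [].
- exact: join0.
- by move=> a f g jf jg; apply: join_lin.
- by move=> p f g jf hg; apply: join_mul.
Qed.

Lemma join_star (I J : bset k m) : is_diideal c I -> is_diideal c J ->
  forall d e n (f : tens k m d n) (g : tens k m e n),
  SImage (join I J) f -> sym_tensor g -> SImage (join I J) (star c g f).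
Proof.
move=> DI DJ d e n f g [F0 [jF0 [t0 [ht0 hs0]]]] hg.
exists (toSym (star c g t0)); split; last first.
  by exists (star c g t0); split => //; rewrite symz_star // hs0.
split; first exact: toSym_homog.
move=> t Ht i hi beta hb hI hJ.
rewrite (coprod_eq hchar i beta Ht).
move: hJ; have E := subnKC hi; move: (n - i)%N E => jj E hJ.
subst n.
rewrite (core_eq hchar c hg).
case: jF0 => _ H; apply: (H t0 ht0 i (leq_addr _ _)).
- exact: betap_bil.
- exact: (betap_I hchar hg hb DI hI).
- rewrite addKn; exact: (betap_J hchar hg hb DJ hJ).
Qed.

End Final.

Theorem proposition4p2
  (k : fieldType) (hchar : [pchar k] =i pred0)
  (A : comAlgType k) (m : nat -> nat) (e : forall d : nat, 'I_(m d) -> A)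
  (c : forall d d' : nat, 'I_(m d) -> 'I_(m d') -> 'I_(m (d + d')%N) -> k)
  (* A = (+)_d B_d, B_d with basis (e d i)_i *)
  (hdirect : forall (N : nat) (a : forall d : nat, 'I_(m d) -> k),
      \sum_(d < N) \sum_(i : 'I_(m d)) a d i *: e d i = 0 ->
      forall (d : 'I_N) (i : 'I_(m d)), a d i = 0)
  (hspan : forall x : A, exists (N : nat) (a : forall d : nat, 'I_(m d) -> k),
      x = \sum_(d < N) \sum_(i : 'I_(m d)) a d i *: e d i)
  (* graded multiplication, with structure constants c *)
  (hmul : forall d d' (i : 'I_(m d)) (j : 'I_(m d')),
      e d i * e d' j = \sum_(l : 'I_(m (d + d')%N)) c d d' i j l *: e (d + d')%N l)
  (* B_0 = k *)
  (hB0 : (forall i : 'I_(m 0%N), exists a : k, e 0%N i = a%:A) /\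
         (exists a : 'I_(m 0%N) -> k, \sum_(i : 'I_(m 0%N)) a i *: e 0%N i = 1))
  (* B generated by B_1 *)
  (hgen : forall d (l : 'I_(m d.+1)), exists a : 'I_(m 1%N) -> 'I_(m d) -> k,
      e d.+1 l = \sum_(i : 'I_(m 1%N)) \sum_(j : 'I_(m d)) a i j *: (e 1%N i * e d j))
  (I J : bset k m) :
  is_diideal c I -> is_diideal c J -> is_diideal c (join I J).
Proof.
move=> DI DJ; split.
- exact: join_is_ideal DI.1 DJ.1.
- move=> d0 e0 n f g; exact: (join_star hchar DI DJ).
Qed.
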